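(* Let $n\in\mathbb{N}$ with $n\ge2$, $S:=\{0,\dots,n-1\}$, and let $C\subseteq\operatorname{codes}(S)$ be a fundamental set. Then the map $\mathbf G:(0,\infty)^S\to\mathbb{R}^C$, $\mathbf G(\rho):=(\alpha(x)|_\rho)_{x\in C}$, is injective when restricted to the set $\{\tau\in(0,\infty)^S:\tau(n-1)=1\}$.
   Context: A coronal code over $S$ of length $m$ is a formal string $x=c:p_0p_1\dots p_{m-1}$ with $c,p_i\in S$; $\operatorname{center}(x)=c$, $\operatorname{petals}(x)=\{p_0,\dots,p_{m-1}\}$; codes are identified up to rotation/reversal of the petal string, giving $\operatorname{codes}(S)$. For $a,b,c\in S$ (indeterminates), $c^a_b:=\arccos\!\Big(\frac{(c+a)^2+(c+b)^2-(a+b)^2}{2(c+a)(c+b)}\Big)$, and $\alpha(x):=\sum_{i=0}^{m-1} c^{p_i}_{p_{i+1\bmod m}}$. For $\rho\in(0,\infty)^S$, $\alpha(x)|_\rho$ is the value obtained by substituting $\rho(s)$ for each symbol $s$. A nonempty $C\subseteq\operatorname{codes}(S)$ is fundamental if $\{\operatorname{center}(x):x\in C\}=\{0,\dots,n-2\}$ and for every nonempty $K\subseteq\{0,\dots,n-2\}$ there is $D\subseteq C$ with $\{\operatorname{center}(x):x\in D\}=K$ and $\big(\bigcup_{x\in D}\operatorname{petals}(x)\big)\setminus K\ne\emptyset$. *)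

(* Defs.v *)
From Stdlib Require Import Reals.
From mathcomp Require Import all_boot.
Set Implicit Arguments.
Unset Strict Implicit.
Unset Printing Implicit Defensive.

(* Codes are identified up to rotation/reversal of the petal
   string; all notions below (center, petal set, alpha) are invariant under
   these operations, so we work with raw representatives. *)
Record code (n : nat) := Code { center : 'I_n ; petal_seq : seq 'I_n }.

Definition petals n (x : code n) (s : 'I_n) : Prop := s \in petal_seq x.

Definition cangle (c a b : R) : R :=
  acos (Rdiv (Rminus (Rplus (pow (Rplus c a) 2) (pow (Rplus c b) 2)) (pow (Rplus a b) 2))
             (Rmult (Rmult (IZR 2) (Rplus c a)) (Rplus c b))).

Definition alpha n (rho : 'I_n -> R) (x : code n) : R :=
  let m := size (petal_seq x) in
  let c := center x in
  \big[Rplus/R0]_(0 <= i < m)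
     cangle (rho c) (rho (nth c (petal_seq x) i))
            (rho (nth c (petal_seq x) ((i.+1) %% m))).

(* Codes have length m >= 1 (the formula uses indices mod m). *)
Definition is_code n (x : code n) : Prop := (0 < size (petal_seq x))%N.

Definition fundamental n (C : code n -> Prop) : Prop :=
  (exists x, C x) /\
  (forall x, C x -> is_code x) /\
  (forall k : 'I_n, (exists x, C x /\ center x = k) <-> (k < n.-1)%N) /\
  (forall K : 'I_n -> Prop,
     (exists k, K k) -> (forall k, K k -> (k < n.-1)%N) ->
     exists D : code n -> Prop,
       (forall x, D x -> C x) /\
       (forall k, (exists x, D x /\ center x = k) <-> K k) /\
       (exists s, (exists x, D x /\ petals x s) /\ ~ K s)).

(* Main.v *)
Require Import Defs.
From Stdlib Require Import Reals Lra Psatz FunctionalExtensionality.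
From mathcomp Require Import all_boot zify.
Open Scope R_scope.

Lemma acos_lt x y : -1 <= x <= 1 -> -1 <= y <= 1 -> x < y -> acos y < acos x.
Proof.
intros Hx Hy Hxy.
pose proof (acos_bound x); pose proof (acos_bound y).
apply cos_decreasing_0; try lra.
rewrite !cos_acos; lra.
Qed.

Lemma acos_le x y : -1 <= x <= 1 -> -1 <= y <= 1 -> x <= y -> acos y <= acos x.
Proof.
intros Hx Hy Hxy. destruct (Req_dec x y) as [->|]; [lra|].
apply Rlt_le, acos_lt; lra.
Qed.

Lemma expr_eq c a b : 0 < c -> 0 < a -> 0 < b ->
  ((c + a)^2 + (c + b)^2 - (a + b)^2) / (2 * (c + a) * (c + b))
  = 1 - 2 * (a * b / ((c + a) * (c + b))).
Proof. intros; field; lra. Qed.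

Lemma g_bounds c a b : 0 < c -> 0 < a -> 0 < b ->
  0 < a * b / ((c + a) * (c + b)) < 1.
Proof.
intros. assert (0 < (c+a)*(c+b)) by nra. split.
- apply Rdiv_lt_0_compat; nra.
- apply (Rmult_lt_reg_r ((c+a)*(c+b))); auto.
  unfold Rdiv; rewrite Rmult_assoc Rinv_l; [nra|lra].
Qed.

Lemma g_diff c a b c' a' b' : 0 < c -> 0 < a -> 0 < b -> 0 < c' -> 0 < a' -> 0 < b' ->
  a * b / ((c + a) * (c + b)) - a' * b' / ((c' + a') * (c' + b')) =
  (a*b*(c'+a')*(c'+b') - a'*b'*(c+a)*(c+b)) / ((c + a) * (c + b) * ((c' + a') * (c' + b'))).
Proof. intros; field; lra. Qed.

Lemma num_ge c a b l a' b' : 0 < c -> 0 < a -> 0 < b -> 0 < l -> 0 < a' -> 0 < b' ->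
  a' <= l * a -> b' <= l * b ->
  0 <= a*b*(l*c+a')*(l*c+b') - a'*b'*(c+a)*(c+b)
  /\ (a' < l * a \/ b' < l * b -> 0 < a*b*(l*c+a')*(l*c+b') - a'*b'*(c+a)*(c+b)).
Proof.
intros.
assert (E : a*b*(l*c+a')*(l*c+b') - a'*b'*(c+a)*(c+b)
  = c*c*((l*a)*(l*b) - a'*b') + c*(a*a'*(l*b-b') + b*b'*(l*a-a'))) by ring.
rewrite E.
assert (HH1 : a' * b' <= (l*a)*(l*b)) by (apply Rmult_le_compat; lra).
assert (0 <= a*a'*(l*b-b')) by (apply Rmult_le_pos; nra).
assert (0 <= b*b'*(l*a-a')) by (apply Rmult_le_pos; nra).
assert (0 < c*c) by nra.
split.
- assert (0 <= c*c*((l*a)*(l*b) - a'*b')) by (apply Rmult_le_pos; lra).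
  assert (0 <= c*(a*a'*(l*b-b') + b*b'*(l*a-a'))) by (apply Rmult_le_pos; lra).
  lra.
- intros Hs. assert (HH2 : a' * b' < (l*a)*(l*b)).
  { destruct Hs. - apply Rle_lt_trans with (a' * (l*b)). apply Rmult_le_compat_l; lra.
      apply Rmult_lt_compat_r; nra.
    - apply Rlt_le_trans with (a' * (l*b)). apply Rmult_lt_compat_l; lra.
      apply Rmult_le_compat_r; nra. }
  assert (0 < c*c*((l*a)*(l*b) - a'*b')) by (apply Rmult_lt_0_compat; lra).
  assert (0 <= c*(a*a'*(l*b-b') + b*b'*(l*a-a'))) by (apply Rmult_le_pos; lra).
  lra.
Qed.

Lemma angle_cmp c a b l a' b' : 0 < c -> 0 < a -> 0 < b -> 0 < l -> 0 < a' -> 0 < b' ->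
  a' <= l * a -> b' <= l * b ->
  cangle (l*c) a' b' <= cangle c a b
  /\ (a' < l * a \/ b' < l * b -> cangle (l*c) a' b' < cangle c a b).
Proof.
intros.
assert (0 < l*c) by nra.
unfold cangle. change (IZR 2) with 2.
rewrite (expr_eq c a b) ?(expr_eq (l*c) a' b'); try lra.
pose proof (g_bounds c a b) as G1. pose proof (g_bounds (l*c) a' b') as G2.
pose proof (g_diff c a b (l*c) a' b') as D.
destruct (num_ge c a b l a' b') as [N1 N2]; auto.
assert (0 < (c + a) * (c + b) * ((l*c + a') * (l*c + b'))).
{ apply Rmult_lt_0_compat; apply Rmult_lt_0_compat; lra. }
split.
- apply acos_le; try lra.
  assert (0 <= (a*b*(l*c+a')*(l*c+b') - a'*b'*(c+a)*(c+b)) / ((c + a) * (c + b) * ((l*c + a') * (l*c + b')))).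
  { apply Rmult_le_pos; [lra| apply Rlt_le, Rinv_0_lt_compat; lra]. }
  lra.
- intros Hs. apply acos_lt; try lra.
  assert (0 < (a*b*(l*c+a')*(l*c+b') - a'*b'*(c+a)*(c+b)) / ((c + a) * (c + b) * ((l*c + a') * (l*c + b')))).
  { apply Rdiv_lt_0_compat; auto. }
  lra.
Qed.

Lemma sum_le (l : seq nat) (F G : nat -> R) :
  (forall i, i \in l -> F i <= G i) ->
  \big[Rplus/R0]_(i <- l) F i <= \big[Rplus/R0]_(i <- l) G i.
Proof.
elim: l => [|a l IH] H; first by rewrite !big_nil; lra.
rewrite !big_cons.
have h1 := H a (mem_head _ _).
have h2 : \big[Rplus/R0]_(i <- l) F i <= \big[Rplus/R0]_(i <- l) G i.
  by apply: IH => i Hi; apply: H; rewrite in_cons Hi orbT.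
lra.
Qed.

Lemma sum_lt (l : seq nat) (F G : nat -> R) :
  (forall i, i \in l -> F i <= G i) -> (exists i, i \in l /\ F i < G i) ->
  \big[Rplus/R0]_(i <- l) F i < \big[Rplus/R0]_(i <- l) G i.
Proof.
elim: l => [|a l IH] H [j [Hj Hlt]]; first by rewrite in_nil in Hj.
rewrite !big_cons.
have h1 := H a (mem_head _ _).
have H' : forall i, i \in l -> F i <= G i.
  by move=> i Hi; apply: H; rewrite in_cons Hi orbT.
rewrite in_cons in Hj. case/orP: Hj => [/eqP Ej | Hj].
- subst j. have := @sum_le l F G H'. lra.
- have := IH H' (ex_intro _ j (conj Hj Hlt)). lra.
Qed.

Lemma max_ex (T : eqType) (f : T -> R) (l : seq T) x0 : x0 \in l ->
  exists x, x \in l /\ forall y, y \in l -> f y <= f x.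
Proof.
elim: l x0 => [|a l IH] x0 //.
move=> _.
case: l IH => [|b l] IH.
- exists a; split; first exact: mem_head.
  move=> y; rewrite in_cons in_nil orbF => /eqP ->; lra.
- have [x [Hx Hm]] := IH b (mem_head _ _).
  destruct (Rle_or_lt (f a) (f x)) as [Hle|Hlt].
  + exists x; split; first by rewrite in_cons Hx orbT.
    move=> y; rewrite in_cons => /orP [/eqP ->|Hy]; [lra | exact: Hm].
  + exists a; split; first exact: mem_head.
    move=> y; rewrite in_cons => /orP [/eqP ->|Hy]; first lra.
    have := Hm y Hy; lra.
Qed.

Lemma core (n : nat) (C : code n -> Prop) :
  fundamental C ->
  forall rho tau : 'I_n -> R,
    (forall s, 0 < rho s) -> (forall s, 0 < tau s) ->
    (forall s : 'I_n, nat_of_ord s = n.-1 -> rho s = R1) ->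
    (forall s : 'I_n, nat_of_ord s = n.-1 -> tau s = R1) ->
    (forall x, C x -> alpha rho x = alpha tau x) ->
    (exists s0, tau s0 < rho s0) -> False.
Proof.
move=> [_ [Hcode [_ Hfund]]] rho tau Hr Ht Hr1 Ht1 Heq [s0 Hs0].
set f := fun k => rho k / tau k.
have [xm [_ Hm]] := @max_ex _ f _ _ (mem_enum 'I_n s0).
set lam := f xm.
have Hfs : forall k, rho k = f k * tau k.
  by move=> k; rewrite /f; field; have := Ht k; lra.
have Hf0 : 1 < f s0.
  have := Hfs s0; have := Ht s0; have := Hr s0; move=> *; nra.
have Hlam : 1 < lam by have := Hm s0 (mem_enum _ _); rewrite -/lam; lra.
have Hle : forall k, rho k <= lam * tau k.
  move=> k; rewrite Hfs; have := Hm k (mem_enum _ _); have := Ht k.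
  rewrite -/lam; move=> *; nra.
pose K := fun k : 'I_n => f k = lam.
have HK1 : exists k, K k by exists xm.
have HK2 : forall k, K k -> (k < n.-1)%N.
  move=> k Hk. have := ltn_ord k.
  case: (boolP (nat_of_ord k == n.-1)) => [/eqP Ek | Nk] Hkn; last by lia.
  exfalso. have := Hfs k. rewrite (Hr1 k Ek) (Ht1 k Ek) Hk. lra.
have [D [HDC [HDK [s [[x [Dx Px]] NKs]]]]] := Hfund K HK1 HK2.
have Cx := HDC x Dx.
have Kc : K (center x) by apply/HDK; exists x.
have Hc : rho (center x) = lam * tau (center x).
  by rewrite Hfs Kc; lra.
have Hs : rho s < lam * tau s.
  have := Hm s (mem_enum _ _); rewrite -/lam => Hs1.
  have Hs2 : f s < lam by unfold K in NKs; lra.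
  rewrite Hfs; have := Ht s; move=> *; nra.
suff : alpha rho x < alpha tau x by rewrite Heq //; lra.
rewrite /alpha Hc.
set ps := petal_seq x. set c := center x.
have Hsz : (0 < size ps)%N := Hcode x Cx.
apply: sum_lt.
- move=> i _.
  have := angle_cmp _ _ _ _ _ _ (Ht c) (Ht (nth c ps i)) (Ht (nth c ps (i.+1 %% size ps)))
          (Rlt_trans _ _ _ Rlt_0_1 Hlam) (Hr _) (Hr _) (Hle _) (Hle _).
  by case.
- exists (index s ps); split.
  + rewrite mem_index_iota /=. by rewrite index_mem.
  + have := angle_cmp _ _ _ _ _ _ (Ht c) (Ht (nth c ps (index s ps))) (Ht (nth c ps ((index s ps).+1 %% size ps)))
          (Rlt_trans _ _ _ Rlt_0_1 Hlam) (Hr _) (Hr _) (Hle _) (Hle _).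
    case=> _; apply; left. by rewrite nth_index.
Qed.

Theorem theorem4p2 (n : nat) (C : code n -> Prop) :
  (2 <= n)%N ->
  fundamental C ->
  forall rho tau : 'I_n -> R,
    (forall s, Rlt R0 (rho s)) -> (forall s, Rlt R0 (tau s)) ->
    (forall s : 'I_n, nat_of_ord s = n.-1 -> rho s = R1) ->
    (forall s : 'I_n, nat_of_ord s = n.-1 -> tau s = R1) ->
    (forall x, C x -> alpha rho x = alpha tau x) ->
    rho = tau.
Proof.
move=> _ HC rho tau Hr Ht Hr1 Ht1 Heq.
apply: functional_extensionality => s.
destruct (Rtotal_order (rho s) (tau s)) as [H|[H|H]]; auto; exfalso.
- apply: (core _ _ HC tau rho Ht Hr Ht1 Hr1) => [x Cx|]; first by rewrite Heq.
  by exists s.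
- apply: (core _ _ HC rho tau Hr Ht Hr1 Ht1 Heq). by exists s.
Qed.
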